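(* Let $\alpha\ge1$, $\rho\in[0,1]$ and $U\ge1$ be reals, and let $r:\mathbb R\to[0,\infty)$ be a nondecreasing, locally integrable function with $r(x)=0$ for $x<0$. For real $y$ let $\beta^{(y)}:=\frac{\alpha}{e^{\alpha}-1}\int_{y-1}^{y}r(x)e^{\alpha(y-x)}\,dx$, and define $$\mathrm{PRD}_a:=\int_{U-\rho}^{U}r(x)\,dx+\frac1\alpha\int_0^{U-\rho}r(x)\,dx-\frac1\alpha\int_0^{U-\rho}\beta^{(x)}\,dx+(1-\rho)\beta^{(U)}.$$ Then $$\mathrm{PRD}_a\le\int_{U-1}^{U-\rho}r(x)\phi_x\,dx+\int_{U-\rho}^{U}r(x)\psi_x\,dx+r(U-1)\,\Omega,$$ where $$\phi_x:=(1-\rho)\frac{\alpha}{e^{\alpha}-1}e^{\alpha(U-x)}+\frac1\alpha\cdot\frac{e^{\alpha}-e^{\alpha(U-\rho-x)}}{e^{\alpha}-1},\qquad \psi_x:=1+(1-\rho)\frac{\alpha}{e^{\alpha}-1}e^{\alpha(U-x)},$$ $$\Omega:=\frac1\alpha\cdot\frac{1}{e^{\alpha}-1}\left(\rho e^{\alpha}-\frac1\alpha\left(e^{\alpha}-e^{\alpha(1-\rho)}\right)\right).$$ *)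

(* Defs.v *)
From Stdlib Require Import Reals.
From Coquelicot Require Import Coquelicot.
Open Scope R_scope.

Definition beta_y (alpha : R) (r : R -> R) (y : R) : R :=
  alpha / (exp alpha - 1) * RInt (fun x => r x * exp (alpha * (y - x))) (y - 1) y.

Definition PRD_a (alpha rho U : R) (r : R -> R) : R :=
  RInt r (U - rho) U
  + / alpha * RInt r 0 (U - rho)
  - / alpha * RInt (fun x => beta_y alpha r x) 0 (U - rho)
  + (1 - rho) * beta_y alpha r U.

Definition phi_x (alpha rho U x : R) : R :=
  (1 - rho) * (alpha / (exp alpha - 1)) * exp (alpha * (U - x))
  + / alpha * ((exp alpha - exp (alpha * (U - rho - x))) / (exp alpha - 1)).

Definition psi_x (alpha rho U x : R) : R :=
  1 + (1 - rho) * (alpha / (exp alpha - 1)) * exp (alpha * (U - x)).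

Definition Omega (alpha rho : R) : R :=
  / alpha * (/ (exp alpha - 1)) *
  (rho * exp alpha - / alpha * (exp alpha - exp (alpha * (1 - rho)))).

(* Main.v *)
Require Import Defs.
From Stdlib Require Import Reals Lra Lia.
From Coquelicot Require Import Coquelicot.
Open Scope R_scope.

Lemma cont_eps (f : R -> R) (x : R) :
  (forall eps, 0 < eps -> exists d, 0 < d /\ forall y, Rabs (y - x) < d -> Rabs (f y - f x) < eps) ->
  continuous f x.
Proof.
  intros H. apply continuity_pt_filterlim.
  unfold continuity_pt, continue_in, limit1_in, limit_in. intros eps Heps. destruct (H eps Heps) as [d [Hd Hy]]. exists d; split; [exact Hd|]. intros y [_ Hy']. exact (Hy y Hy').
Qed.

Lemma Int_part_eq (y : R) (k : nat) : INR k < y < INR k + 1 -> Int_part y = Z.of_nat k.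
Proof.
  intros [H1 H2]. destruct (base_Int_part y) as [B1 B2].
  rewrite INR_IZR_INZ in H1, H2.
  assert (A1 : (Int_part y < Z.of_nat k + 1)%Z).
  { apply lt_IZR. rewrite plus_IZR. generalize dependent (IZR (Int_part y)). generalize dependent (IZR (Z.of_nat k)). intros. lra. }
  assert (A2 : (Z.of_nat k - 1 < Int_part y)%Z).
  { apply lt_IZR. rewrite minus_IZR. generalize dependent (IZR (Int_part y)). generalize dependent (IZR (Z.of_nat k)). intros. lra. }
  lia.
Qed.

Lemma ex_RInt_mult_const (g : R -> R) (C a b : R) :
  ex_RInt g a b -> ex_RInt (fun x => g x * C) a b.
Proof.
  intros H. apply ex_RInt_ext with (fun x => scal C (g x)).
  { intros x _. exact (Rmult_comm C (g x)). }
  exact (ex_RInt_scal g a b C H).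
Qed.
Lemma cl_in a b x : a <= b -> a <= Rmax a (Rmin b x) <= b.
Proof. intros H. unfold Rmax, Rmin. destruct (Rle_dec b x); destruct (Rle_dec a _); lra. Qed.
Lemma cl_id a b x : a <= x <= b -> Rmax a (Rmin b x) = x.
Proof. intros H. unfold Rmax, Rmin. destruct (Rle_dec b x); destruct (Rle_dec a _); lra. Qed.

Lemma div_bounds (u h k : R) : 0 < h -> k * h < u < (k + 1) * h -> k < u / h < k + 1.
Proof.
  intros Hh [H1 H2]. assert (E : u / h * h = u) by (field; lra).
  generalize dependent (u / h). intros q E. split; nra.
Qed.

Lemma archi (e : R) : 0 < e -> exists N : nat, forall n, (N <= n)%nat -> / INR (S n) < e.
Proof.
  intros He. destruct (archimed_cor1 e He) as [N [H1 H2]]. exists N. intros n Hn.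
  assert (INR N <= INR (S n)) by (apply le_INR; lia).
  assert (0 < INR N) by (apply lt_0_INR; lia).
  apply Rle_lt_trans with (/ INR N); [|exact H1].
  apply Rinv_le_contravar; lra.
Qed.

Section Prod.
Variables (g f : R -> R) (a b : R).
Hypothesis Hg : forall c d, ex_RInt g c d.
Hypothesis Hf : forall x, continuous f x.
Hypothesis Hab : a < b.

Let cl x := Rmax a (Rmin b x).
Let hn (n : nat) := (b - a) / INR (S n).
Let A (n : nat) (x : R) := g (cl x) * f (a + hn n * IZR (Int_part ((cl x - a) / hn n))).
Let T (x : R) := g (cl x) * f (cl x).

Lemma hn_pos n : 0 < hn n.
Proof. unfold hn. apply Rdiv_lt_0_compat; [lra|]. apply lt_0_INR; lia. Qed.

Lemma step1 n : ex_RInt (A n) a b.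
Proof.
  pose proof (hn_pos n) as Hh.
  assert (Hk : forall k, (k <= S n)%nat -> ex_RInt (A n) a (a + INR k * hn n)).
  { induction k as [|k IH]; intros Hk.
    - simpl. replace (a + 0 * hn n) with a by ring. apply ex_RInt_point.
    - apply ex_RInt_Chasles with (a + INR k * hn n). { apply IH; lia. }
      assert (Hkn : INR (S k) <= INR (S n)) by (apply le_INR; lia).
      assert (Hb : a + INR (S n) * hn n = b).
      { unfold hn. field. apply not_0_INR; lia. }
      rewrite S_INR in Hkn |- *.
      apply ex_RInt_ext with (fun x => g x * f (a + hn n * INR k)).
      + intros x Hx. rewrite Rmin_left in Hx by lra. rewrite Rmax_right in Hx by lra.
        assert (Hk0 : 0 <= INR k) by apply pos_INR.
        assert (P1 : 0 <= INR k * hn n) by (apply Rmult_le_pos; lra).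
        assert (P2 : (INR k + 1) * hn n <= INR (S n) * hn n) by (apply Rmult_le_compat_r; lra).
        assert (Hx2 : a <= x <= b) by lra.
        unfold A. fold (cl x). replace (cl x) with x by (symmetry; apply cl_id; exact Hx2).
        rewrite (Int_part_eq _ k). { rewrite <- INR_IZR_INZ. reflexivity. }
        apply div_bounds; [exact Hh|]. lra.
      + apply ex_RInt_mult_const. apply Hg. }
  replace b with (a + INR (S n) * hn n).
  { apply Hk; lia. }
  unfold hn. field. apply not_0_INR; lia.
Qed.

Lemma step2 : filterlim A eventually (locally (T : fct_UniformSpace R R_UniformSpace)).
Proof.
  apply filterlim_locally. intros eps.
  destruct (ex_RInt_ub g a b (Hg a b)) as [M0 HM0].
  rewrite Rmin_left in HM0 by lra. rewrite Rmax_right in HM0 by lra.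
  set (M := Rabs M0 + 1).
  assert (HM : 0 < M) by (unfold M; pose proof (Rabs_pos M0); lra).
  assert (He' : 0 < eps / (2 * M)) by (apply Rdiv_lt_0_compat; [apply cond_pos|lra]).
  destruct (Heine f (fun c => a <= c <= b) (compact_P3 a b)
             (fun x _ => proj2 (continuity_pt_filterlim f x) (Hf x)) (mkposreal _ He'))
    as [d Hd].
  assert (Hd' : 0 < d / (b - a)) by (apply Rdiv_lt_0_compat; [apply cond_pos|lra]).
  destruct (archi _ Hd') as [N HN].
  exists N. intros n Hn. intro t.
  change (Rabs (A n t - T t) < eps).
  pose proof (hn_pos n) as Hh.
  assert (Hhd : hn n < d).
  { pose proof (HN n Hn) as H1. unfold hn. unfold Rdiv. 
    assert (E : (b - a) * (d / (b - a)) = d) by (field; lra).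
    rewrite <- E. apply Rmult_lt_compat_l; lra. }
  unfold A, T. fold (cl t).
  pose proof (cl_in a b t (Rlt_le _ _ Hab)) as Hy. fold (cl t) in Hy.
  generalize dependent (cl t). intros y Hy.
  set (q := (y - a) / hn n).
  assert (Hq : 0 <= q) by (unfold q; apply Rdiv_le_0_compat; lra).
  assert (Eq : q * hn n = y - a) by (unfold q; field; lra).
  destruct (base_Int_part q) as [B1 B2].
  assert (I0 : (0 <= Int_part q)%Z).
  { assert (H : IZR (0 - 1) < IZR (Int_part q)).
    { rewrite minus_IZR. generalize dependent (IZR (Int_part q)). intros. lra. }
    apply lt_IZR in H. lia. }
  apply IZR_le in I0.
  generalize dependent (IZR (Int_part q)). intros z B1 B2 I0.
  assert (Z1 : hn n * z <= y - a) by nra.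
  assert (Z2 : y - a - hn n < hn n * z) by nra.
  assert (Z3 : 0 <= hn n * z) by nra.
  assert (Hfz : Rabs (f y - f (a + hn n * z)) < eps / (2 * M)).
  { apply (Hd y (a + hn n * z)); simpl; try lra. rewrite Rabs_right; lra. }
  replace (g y * f (a + hn n * z) - g y * f y) with (g y * (- (f y - f (a + hn n * z)))) by ring.
  rewrite Rabs_mult, Rabs_Ropp.
  assert (Hg1 : Rabs (g y) <= M).
  { pose proof (HM0 y Hy) as H. change (Rabs (g y) <= M0) in H. unfold M. pose proof (Rle_abs M0). lra. }
  apply Rle_lt_trans with (M * (eps / (2 * M))).
  { apply Rmult_le_compat; try apply Rabs_pos; lra. }
  replace (M * (eps / (2 * M))) with (eps / 2) by (field; lra).
  pose proof (cond_pos eps). lra.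
Qed.

Lemma prod_main : ex_RInt (fun x => g x * f x) a b.
Proof.
  destruct (filterlim_RInt A a b eventually eventually_filter T (fun n => RInt (A n) a b)
    (fun n => RInt_correct _ _ _ (step1 n)) step2) as [If [_ HIf]].
  apply ex_RInt_ext with T.
  - intros x Hx. rewrite Rmin_left in Hx by lra. rewrite Rmax_right in Hx by lra.
    unfold T, cl. rewrite (cl_id a b x) by lra. reflexivity.
  - exists If. exact HIf.
Qed.
End Prod.

Lemma ex_RInt_prod (g f : R -> R) (a b : R) :
  (forall c d, ex_RInt g c d) -> (forall x, continuous f x) -> ex_RInt (fun x => g x * f x) a b.
Proof.
  intros Hg Hf. destruct (Rtotal_order a b) as [H|[H|H]].
  - exact (prod_main g f a b Hg Hf H).
  - subst. apply ex_RInt_point.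
  - apply ex_RInt_swap. exact (prod_main g f b a Hg Hf H).
Qed.

Lemma cont_eps_inv (f : R -> R) (x : R) : continuous f x ->
  forall eps, 0 < eps -> exists d, 0 < d /\ forall y, Rabs (y - x) < d -> Rabs (f y - f x) < eps.
Proof.
  intros Hc eps Heps. apply continuity_pt_filterlim in Hc.
  destruct (Hc eps Heps) as [d [Hd Hy]]. exists d. split; [exact Hd|].
  intros y Hyx. destruct (Req_dec y x) as [->|Hne].
  - unfold Rminus. rewrite Rplus_opp_r, Rabs_R0. exact Heps.
  - exact (Hy y (conj (conj I (not_eq_sym Hne)) Hyx)).
Qed.

Lemma loc_bound (g : R -> R) (t : R) : (forall c d, ex_RInt g c d) ->
  exists M, 0 < M /\ forall s, t - 1 <= s <= t + 1 -> Rabs (g s) <= M.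
Proof.
  intros Hg. destruct (ex_RInt_ub g (t - 1) (t + 1) (Hg _ _)) as [M0 HM0].
  rewrite Rmin_left in HM0 by lra. rewrite Rmax_right in HM0 by lra.
  exists (Rabs M0 + 1). split. { pose proof (Rabs_pos M0); lra. }
  intros s Hs. pose proof (HM0 s Hs) as H. change (Rabs (g s) <= M0) in H.
  pose proof (Rle_abs M0). lra.
Qed.

Lemma RInt_small (k : R -> R) (t y B : R) : ex_RInt k t y -> Rabs (y - t) <= 1 ->
  (forall s, t - 1 <= s <= t + 1 -> Rmin t y <= s <= Rmax t y -> Rabs (k s) <= B) ->
  Rabs (RInt k t y) <= Rabs (y - t) * B.
Proof.
  intros Hk Hyt HB.
  apply (norm_RInt_le_const_abs k t y (RInt k t y) B); [| exact (RInt_correct _ _ _ Hk)].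
  intros x Hx. change (Rabs (k x) <= B). apply HB; [|exact Hx].
  revert Hx. apply Rabs_le_between' in Hyt.
  unfold Rmin, Rmax; destruct (Rle_dec t y); intros; lra.
Qed.

Lemma G_cont (g G : R -> R) : (forall c d, ex_RInt g c d) ->
  (forall s t, G t - G s = RInt g s t) -> forall t, continuous G t.
Proof.
  intros Hg HG t. apply cont_eps. intros eps Heps.
  destruct (loc_bound g t Hg) as [M [HM HMb]].
  exists (Rmin 1 (eps / M)). split.
  { apply Rmin_pos; [lra|]. apply Rdiv_lt_0_compat; lra. }
  intros y Hy. rewrite HG.
  pose proof (Rmin_l 1 (eps / M)). pose proof (Rmin_r 1 (eps / M)).
  eapply Rle_lt_trans. apply (RInt_small g t y M (Hg _ _)). lra.
  { intros s Hs _. apply HMb; exact Hs. }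
  apply Rlt_le_trans with (eps / M * M). { apply Rmult_lt_compat_r; lra. }
  right. field. lra.
Qed.

Section IBP.
Variables (f df g G : R -> R).
Hypothesis Hf : forall t, is_derive f t (df t).
Hypothesis Hdf : forall t, continuous df t.
Hypothesis Hg : forall c d, ex_RInt g c d.
Hypothesis Hfg : forall c d, ex_RInt (fun t => f t * g t) c d.
Hypothesis HG : forall s t, G t - G s = RInt g s t.

Let Psi t := f t * G t - RInt (fun s => f s * g s) 0 t.

Lemma Psi_deriv t : is_derive Psi t (df t * G t).
Proof.
  apply is_derive_Reals. intros eps Heps.
  destruct (loc_bound g t Hg) as [M [HM HMb]].
  assert (HGt : 0 < Rabs (G t) + 1) by (pose proof (Rabs_pos (G t)); lra).
  assert (He1 : 0 < eps / (2 * (Rabs (G t) + 1))) by (apply Rdiv_lt_0_compat; lra).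
  pose proof (Hf t) as Hd. apply is_derive_Reals in Hd.
  destruct (Hd _ He1) as [d1 Hd1].
  assert (Hcf : continuous f t) by (apply continuity_pt_filterlim; apply derivable_continuous_pt; exists (df t); exact Hd).
  assert (He2 : 0 < eps / (4 * M)) by (apply Rdiv_lt_0_compat; lra).
  destruct (cont_eps_inv f t Hcf _ He2) as [d2 [Hd2 Hd2b]].
  assert (Hdp : 0 < Rmin 1 (Rmin d1 d2)).
  { apply Rmin_pos; [lra|]. apply Rmin_pos; [apply cond_pos|exact Hd2]. }
  exists (mkposreal _ Hdp). simpl. intros h Hh0 Hh.
  pose proof (Rmin_l 1 (Rmin d1 d2)). pose proof (Rmin_r 1 (Rmin d1 d2)).
  pose proof (Rmin_l d1 d2). pose proof (Rmin_r d1 d2).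
  set (Ig := RInt g t (t + h)).
  set (Ifg := RInt (fun s => f s * g s) t (t + h)).
  assert (EG : G (t + h) = G t + Ig) by (unfold Ig; rewrite <- HG; ring).
  assert (EF : RInt (fun s => f s * g s) 0 (t + h) = RInt (fun s => f s * g s) 0 t + Ifg).
  { unfold Ifg. symmetry. exact (RInt_Chasles (fun s => f s * g s) 0 t (t + h) (Hfg _ _) (Hfg _ _)). }
  assert (EPsi : Psi (t + h) - Psi t = (f (t + h) * Ig - Ifg) + (f (t + h) - f t) * G t).
  { unfold Psi. rewrite EG, EF. ring. }
  assert (HJ : Rabs (f (t + h) * Ig - Ifg) <= Rabs h * (eps / 2)).
  { assert (EJ : f (t + h) * Ig - Ifg = RInt (fun s => (f (t + h) - f s) * g s) t (t + h)).
    { assert (HI : is_RInt (fun s => (f (t + h) - f s) * g s) t (t + h) (minus (scal (f (t + h)) Ig) Ifg)).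
      { apply is_RInt_ext with (fun s => minus (scal (f (t+h)) (g s)) (f s * g s)).
        { intros x _. change (f (t + h) * g x - f x * g x = (f (t + h) - f x) * g x). ring. }
        exact (is_RInt_minus _ _ t (t+h) _ _ (is_RInt_scal _ t (t+h) (f (t+h)) _ (RInt_correct g t (t+h) (Hg _ _))) (RInt_correct _ t (t+h) (Hfg _ _))). }
      rewrite (is_RInt_unique _ _ _ _ HI). reflexivity. }
    rewrite EJ.
    replace (Rabs h) with (Rabs (t + h - t)) by (f_equal; ring).
    apply RInt_small.
    - apply ex_RInt_ext with (fun s => minus (scal (f (t+h)) (g s)) (f s * g s)).
      { intros x _. change (f (t + h) * g x - f x * g x = (f (t + h) - f x) * g x). ring. }
      exact (ex_RInt_minus _ _ t (t+h) (ex_RInt_scal g t (t+h) (f (t+h)) (Hg _ _)) (Hfg _ _)).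
    - replace (t + h - t) with h by ring. lra.
    - intros s Hs Hs2. rewrite Rabs_mult.
      assert (Hst : Rabs (s - t) < d2).
      { revert Hs2. apply Rabs_def2 in Hh. unfold Rmin, Rmax; destruct (Rle_dec t (t+h)); intros;
        apply Rabs_def1; lra. }
      assert (Hht : Rabs (t + h - t) < d2).
      { replace (t + h - t) with h by ring. lra. }
      pose proof (Hd2b _ Hst). pose proof (Hd2b _ Hht).
      assert (Hfs : Rabs (f (t + h) - f s) <= eps / (2 * M)).
      { replace (f (t + h) - f s) with ((f (t + h) - f t) - (f s - f t)) by ring.
        eapply Rle_trans. apply Rabs_triang. rewrite Rabs_Ropp.
        replace (eps / (2 * M)) with (eps / (4 * M) + eps / (4 * M)) by (field; lra). lra. }
      apply Rle_trans with (eps / (2 * M) * M).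
      { apply Rmult_le_compat; try apply Rabs_pos; try exact Hfs. apply HMb; exact Hs. }
      right. field. lra. }
  replace ((Psi (t + h) - Psi t) / h - df t * G t)
    with ((f (t + h) * Ig - Ifg) / h + ((f (t + h) - f t) / h - df t) * G t)
    by (rewrite EPsi; field; exact Hh0).
  eapply Rle_lt_trans. apply Rabs_triang.
  assert (A1 : Rabs ((f (t + h) * Ig - Ifg) / h) <= eps / 2).
  { unfold Rdiv. rewrite Rabs_mult, Rabs_inv.
    assert (Hah : 0 < Rabs h) by (apply Rabs_pos_lt; exact Hh0).
    apply Rmult_le_reg_r with (Rabs h); [exact Hah|].
    rewrite Rmult_assoc, Rinv_l by lra. lra. }
  assert (A2 : Rabs (((f (t + h) - f t) / h - df t) * G t) < eps / 2).
  { rewrite Rabs_mult.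
    assert (Hh1 : Rabs h < d1) by lra.
    pose proof (Hd1 h Hh0 Hh1) as Q. replace (t + h) with (t + h) in Q by ring.
    apply Rle_lt_trans with (eps / (2 * (Rabs (G t) + 1)) * Rabs (G t)).
    { apply Rmult_le_compat_r; [apply Rabs_pos| lra]. }
    apply Rlt_le_trans with (eps / (2 * (Rabs (G t) + 1)) * (Rabs (G t) + 1)).
    { apply Rmult_lt_compat_l; lra. }
    right. field. lra. }
  lra.
Qed.

Lemma ibp a b :
  is_RInt (fun t => df t * G t) a b (f b * G b - f a * G a - RInt (fun t => f t * g t) a b).
Proof.
  assert (H := is_RInt_derive Psi (fun t => df t * G t) a b
     (fun x _ => Psi_deriv x)
     (fun x _ => continuous_mult df G x (Hdf x) (G_cont g G Hg HG x))).
  assert (C : RInt (fun s => f s * g s) 0 a + RInt (fun s => f s * g s) a b = RInt (fun s => f s * g s) 0 b)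
    by exact (RInt_Chasles (fun s => f s * g s) 0 a b (Hfg _ _) (Hfg _ _)).
  assert (E : f b * G b - f a * G a - RInt (fun t => f t * g t) a b = Psi b - Psi a).
  { unfold Psi. rewrite <- C. ring. }
  rewrite E. exact H.
Qed.
End IBP.

Lemma RInt_lin2 (u v : R -> R) (k1 k2 a b : R) : ex_RInt u a b -> ex_RInt v a b ->
  is_RInt (fun x => k1 * u x + k2 * v x) a b (k1 * RInt u a b + k2 * RInt v a b).
Proof.
  intros Hu Hv.
  exact (is_RInt_plus _ _ a b _ _ (is_RInt_scal _ a b k1 _ (RInt_correct u a b Hu))
          (is_RInt_scal _ a b k2 _ (RInt_correct v a b Hv))).
Qed.

Lemma cont_expneg al x : continuous (fun y => exp (- (al * y))) x.
Proof. apply (ex_derive_continuous (K:=R_AbsRing) (V:=R_NormedModule)). auto_derive. exact I. Qed.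
Lemma cont_exp al x : continuous (fun y => exp (al * y)) x.
Proof. apply (ex_derive_continuous (K:=R_AbsRing) (V:=R_NormedModule)). auto_derive. exact I. Qed.

Lemma Chasles_R (h : R -> R) a b c : (forall x y, ex_RInt h x y) -> @eq R (RInt h a b + RInt h b c) (RInt h a c).
Proof. intros H. exact (RInt_Chasles h a b c (H _ _) (H _ _)). Qed.

Lemma RInt_zero_on (h : R -> R) a b : (forall x, Rmin a b < x < Rmax a b -> h x = 0) -> RInt h a b = 0.
Proof.
  intros H. rewrite (RInt_ext h (fun _ => 0)) by exact H.
  rewrite RInt_const. change ((b - a) * 0 = 0). ring.
Qed.

Theorem lemmaB3 (alpha rho U : R) (r : R -> R)
  (halpha : 1 <= alpha) (hrho0 : 0 <= rho) (hrho1 : rho <= 1) (hU : 1 <= U)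
  (hr_nonneg : forall x, 0 <= r x)
  (hr_mono : forall x y, x <= y -> r x <= r y)
  (hr_loc : forall a b, ex_RInt r a b)
  (hr_neg : forall x, x < 0 -> r x = 0) :
  PRD_a alpha rho U r <=
    RInt (fun x => r x * phi_x alpha rho U x) (U - 1) (U - rho)
    + RInt (fun x => r x * psi_x alpha rho U x) (U - rho) U
    + r (U - 1) * Omega alpha rho.
Proof.
  assert (Ha : 0 < alpha) by lra.
  set (E := exp alpha).
  assert (HE : 1 < E) by (unfold E; rewrite <- exp_0; apply exp_increasing; lra).
  set (g := fun x => r x * exp (- (alpha * x))).
  assert (Hg : forall c d, ex_RInt g c d).
  { intros c d. apply ex_RInt_prod; [exact hr_loc | apply cont_expneg]. }
  set (G := fun x => RInt g 0 x).
  assert (HG : forall s t, G t - G s = RInt g s t).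
  { intros s t. unfold G. rewrite <- (Chasles_R g 0 s t Hg). ring. }
  assert (HGs : forall s t, @eq R (RInt g s t) (G t - G s)) by (intros; rewrite HG; reflexivity).
  set (Rr := fun x => RInt r 0 x).
  assert (HR : forall s t, @eq R (RInt r s t) (Rr t - Rr s)).
  { intros s t. unfold Rr. rewrite <- (Chasles_R r 0 s t hr_loc). lra. }
  assert (G0 : G 0 = 0) by (unfold G; exact (RInt_point 0 g)).
  assert (Gm1 : G (-1) = 0).
  { unfold G. apply RInt_zero_on. intros x Hx.
    rewrite Rmin_right in Hx by lra. rewrite Rmax_left in Hx by lra.
    unfold g. rewrite hr_neg by lra. ring. }
  assert (Rm1 : Rr (-1) = 0).
  { unfold Rr. apply RInt_zero_on. intros x Hx.
    rewrite Rmin_right in Hx by lra. rewrite Rmax_left in Hx by lra.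
    apply hr_neg. lra. }
  assert (Hbeta : forall y, beta_y alpha r y = alpha / (E - 1) * (exp (alpha * y) * (G y - G (y - 1)))).
  { intros y. unfold beta_y. fold E. f_equal.
    apply is_RInt_unique.
    apply is_RInt_ext with (fun x => scal (exp (alpha * y)) (g x)).
    { intros x _. change (exp (alpha * y) * (r x * exp (- (alpha * x))) = r x * exp (alpha * (y - x))).
      replace (alpha * (y - x)) with (alpha * y + - (alpha * x)) by ring. rewrite exp_plus. ring. }
    rewrite <- HGs. exact (is_RInt_scal _ _ _ _ _ (RInt_correct g (y - 1) y (Hg _ _))). }
  assert (Rr0 : Rr 0 = 0) by (unfold Rr; exact (RInt_point 0 r)).
  clearbody G Rr.
  set (f := fun y => exp (alpha * y) / alpha).
  assert (Hf : forall t, is_derive f t (exp (alpha * t))).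
  { intros t. unfold f. auto_derive; [exact I|]. field. lra. }
  assert (Pfg : forall x, f x * g x = / alpha * r x).
  { intros x. unfold f, g.
    replace (exp (alpha * x) / alpha * (r x * exp (- (alpha * x))))
      with (/ alpha * r x * (exp (alpha * x) * exp (- (alpha * x)))) by (field; lra).
    rewrite <- exp_plus. replace (alpha * x + - (alpha * x)) with 0 by ring. rewrite exp_0. ring. }
  assert (Hfg : forall c d, ex_RInt (fun t => f t * g t) c d).
  { intros c d. apply ex_RInt_ext with (fun t => scal (/ alpha) (r t)).
    { intros x _. symmetry. exact (Pfg x). }
    exact (ex_RInt_scal r c d (/ alpha) (hr_loc c d)). }
  assert (Efg : forall c d, RInt (fun t => f t * g t) c d = / alpha * RInt r c d).
  { intros c d. apply is_RInt_unique.
    apply is_RInt_ext with (fun t => scal (/ alpha) (r t)).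
    { intros x _. symmetry. exact (Pfg x). }
    exact (is_RInt_scal _ _ _ _ _ (RInt_correct r c d (hr_loc _ _))). }
  pose proof (ibp f (fun t => exp (alpha * t)) g G Hf (cont_exp alpha) Hg Hfg HG 0 (U - rho)) as I1.
  set (g1 := fun y => g (y - 1)).
  set (G1 := fun y => G (y - 1)).
  assert (Eg1 : forall x, g1 x = scal 1 (g (1 * x + -1))).
  { intros x. unfold g1. replace (1 * x + -1) with (x - 1) by ring. change (g (x - 1) = 1 * g (x - 1)). ring. }
  assert (Hg1 : forall c d, ex_RInt g1 c d).
  { intros c d. apply ex_RInt_ext with (fun y => scal 1 (g (1 * y + -1))).
    { intros x _. symmetry. apply Eg1. }
    exact (ex_RInt_comp_lin g 1 (-1) c d (Hg _ _)). }
  assert (Pfg1 : forall x, f x * g1 x = scal (E / alpha) (scal 1 (r (1 * x + -1)))).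
  { intros x. replace (1 * x + -1) with (x - 1) by ring.
    unfold f, g1, g. change (exp (alpha * x) / alpha * (r (x - 1) * exp (- (alpha * (x - 1)))) = E / alpha * (1 * r (x - 1))).
    replace (exp (alpha * x) / alpha * (r (x - 1) * exp (- (alpha * (x - 1)))))
      with (/ alpha * r (x - 1) * (exp (alpha * x) * exp (- (alpha * (x - 1))))) by (field; lra).
    rewrite <- exp_plus. replace (alpha * x + - (alpha * (x - 1))) with alpha by ring. fold E. field. lra. }
  assert (Hfg1 : forall c d, ex_RInt (fun t => f t * g1 t) c d).
  { intros c d. apply ex_RInt_ext with (fun y => scal (E / alpha) (scal 1 (r (1 * y + -1)))).
    { intros x _. symmetry. apply Pfg1. }
    exact (ex_RInt_scal _ c d (E / alpha) (ex_RInt_comp_lin r 1 (-1) c d (hr_loc _ _))). }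
  assert (Efg1 : forall c d, RInt (fun t => f t * g1 t) c d = E / alpha * RInt r (c - 1) (d - 1)).
  { intros c d. apply is_RInt_unique.
    apply is_RInt_ext with (fun y => scal (E / alpha) (scal 1 (r (1 * y + -1)))).
    { intros x _. symmetry. apply Pfg1. }
    replace (RInt r (c - 1) (d - 1)) with (RInt r (1 * c + -1) (1 * d + -1)) by (f_equal; ring).
    exact (is_RInt_scal _ c d (E / alpha) _ (is_RInt_comp_lin r 1 (-1) c d _ (RInt_correct _ _ _ (hr_loc _ _)))). }
  assert (HG1 : forall s t, G1 t - G1 s = RInt g1 s t).
  { intros s t. unfold G1. rewrite HG. symmetry. apply is_RInt_unique.
    apply is_RInt_ext with (fun y => scal 1 (g (1 * y + -1))).
    { intros x _. symmetry. apply Eg1. }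
    replace (RInt g (s - 1) (t - 1)) with (RInt g (1 * s + -1) (1 * t + -1)) by (f_equal; ring).
    exact (is_RInt_comp_lin g 1 (-1) s t _ (RInt_correct _ _ _ (Hg _ _))). }
  pose proof (ibp f (fun t => exp (alpha * t)) g1 G1 Hf (cont_exp alpha) Hg1 Hfg1 HG1 0 (U - rho)) as I2.
  set (V := U - rho) in *.
  assert (Ib : RInt (fun x => beta_y alpha r x) 0 V =
     alpha / (E - 1) * ((f V * G V - f 0 * G 0 - RInt (fun t => f t * g t) 0 V)
                        - (f V * G1 V - f 0 * G1 0 - RInt (fun t => f t * g1 t) 0 V))).
  { apply is_RInt_unique.
    apply is_RInt_ext with (fun y => scal (alpha / (E - 1)) (minus (exp (alpha * y) * G y) (exp (alpha * y) * G1 y))).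
    { intros x _. rewrite Hbeta. unfold G1.
      change (alpha / (E - 1) * (exp (alpha * x) * G x - exp (alpha * x) * G (x - 1)) =
              alpha / (E - 1) * (exp (alpha * x) * (G x - G (x - 1)))). ring. }
    exact (is_RInt_scal _ 0 V _ _ (is_RInt_minus _ _ 0 V _ _ I1 I2)). }
  set (eU := exp (alpha * U)). set (eV := exp (alpha * V)).
  set (c := alpha / (E - 1)).
  assert (Pphi : forall x, r x * phi_x alpha rho U x =
     ((1 - rho) * c * eU - eV / (alpha * (E - 1))) * g x + (E / (alpha * (E - 1))) * r x).
  { intros x. unfold phi_x, g, c, eU, eV, V. fold E.
    replace (alpha * (U - x)) with (alpha * U + - (alpha * x)) by ring.
    replace (alpha * (U - rho - x)) with (alpha * (U - rho) + - (alpha * x)) by ring.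
    rewrite !exp_plus. field. lra. }
  assert (Iphi : RInt (fun x => r x * phi_x alpha rho U x) (U - 1) V =
     ((1 - rho) * c * eU - eV / (alpha * (E - 1))) * (G V - G (U - 1)) + (E / (alpha * (E - 1))) * (Rr V - Rr (U - 1))).
  { apply is_RInt_unique. rewrite <- HGs, <- HR.
    apply is_RInt_ext with (fun x => ((1 - rho) * c * eU - eV / (alpha * (E - 1))) * g x + (E / (alpha * (E - 1))) * r x).
    { intros x _. symmetry. apply Pphi. }
    exact (RInt_lin2 g r _ _ _ _ (Hg _ _) (hr_loc _ _)). }
  assert (Ppsi : forall x, r x * psi_x alpha rho U x = ((1 - rho) * c * eU) * g x + 1 * r x).
  { intros x. unfold psi_x, g, c, eU. fold E.
    replace (alpha * (U - x)) with (alpha * U + - (alpha * x)) by ring.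
    rewrite !exp_plus. field. lra. }
  assert (Ipsi : RInt (fun x => r x * psi_x alpha rho U x) V U =
     ((1 - rho) * c * eU) * (G U - G V) + 1 * (Rr U - Rr V)).
  { apply is_RInt_unique. rewrite <- HGs, <- HR.
    apply is_RInt_ext with (fun x => ((1 - rho) * c * eU) * g x + 1 * r x).
    { intros x _. symmetry. apply Ppsi. }
    exact (RInt_lin2 g r _ _ _ _ (Hg _ _) (hr_loc _ _)). }
  assert (K : E * (Rr (U - 1) - Rr (V - 1)) - eV * (G (U - 1) - G (V - 1))
              <= r (U - 1) * (rho * E - (E - exp (alpha * (1 - rho))) / alpha)).
  { set (F := fun x => r (U - 1) * (E * x + eV * exp (- (alpha * x)) / alpha)).
    set (w := fun x => r (U - 1) * (E - eV * exp (- (alpha * x)))).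
    assert (HF : is_RInt w (V - 1) (U - 1) (minus (F (U - 1)) (F (V - 1)))).
    { apply (is_RInt_derive (V:=R_CompleteNormedModule) F w).
      - intros x _. unfold F, w. auto_derive; [exact I|]. field. lra.
      - intros x _. unfold w. apply (ex_derive_continuous (K:=R_AbsRing) (V:=R_NormedModule)). auto_derive. exact I. }
    assert (e1 : eV * exp (- (alpha * (U - 1))) = exp (alpha * (1 - rho))).
    { unfold eV. rewrite <- exp_plus. f_equal. unfold V. ring. }
    assert (e2 : eV * exp (- (alpha * (V - 1))) = E).
    { unfold eV. rewrite <- exp_plus. unfold E. f_equal. ring. }
    assert (Hval : F (U - 1) - F (V - 1) = r (U - 1) * (rho * E - (E - exp (alpha * (1 - rho))) / alpha)).
    { unfold F. rewrite e1, e2. unfold V. field. lra. }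
    assert (Hlin := RInt_lin2 r g E (- eV) (V - 1) (U - 1) (hr_loc _ _) (Hg _ _)).
    rewrite HR, HGs in Hlin.
    rewrite <- Hval.
    replace (E * (Rr (U - 1) - Rr (V - 1)) - eV * (G (U - 1) - G (V - 1)))
      with (E * (Rr (U - 1) - Rr (V - 1)) + - eV * (G (U - 1) - G (V - 1))) by ring.
    apply (is_RInt_le _ _ (V - 1) (U - 1) _ _ ltac:(unfold V; lra) Hlin HF).
    intros x Hx. unfold w, g.
    assert (Hex : eV * exp (- (alpha * x)) <= E).
    { unfold eV, E. rewrite <- exp_plus.
      assert (alpha * (V - x) <= alpha * 1) by (apply Rmult_le_compat_l; lra).
      assert (Hq : alpha * V + - (alpha * x) <= alpha) by lra.
      destruct (Rle_lt_or_eq_dec _ _ Hq) as [Hlt|Heq].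
      - left. apply exp_increasing. exact Hlt.
      - right. rewrite Heq. reflexivity. }
    assert (Hrx : r x <= r (U - 1)) by (apply hr_mono; lra).
    pose proof (hr_nonneg x).
    replace (E * r x + - eV * (r x * exp (- (alpha * x)))) with (r x * (E - eV * exp (- (alpha * x)))) by ring.
    apply Rmult_le_compat_r; lra. }
  unfold PRD_a. change (U - rho) with V.
  rewrite Ib, Iphi, Ipsi, Hbeta, Efg, Efg1, !HR.
  unfold Omega. fold E.
  unfold f, G1. replace (0 - 1) with (-1) by ring.
  rewrite Gm1, G0, Rm1, Rr0. replace (exp (alpha * 0)) with 1 by (rewrite Rmult_0_r; symmetry; apply exp_0).
  match goal with |- ?L <= ?Rt => assert (D : Rt - L = / (alpha * (E - 1)) *
     (r (U - 1) * (rho * E - (E - exp (alpha * (1 - rho))) / alpha)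
      - (E * (Rr (U - 1) - Rr (V - 1)) - eV * (G (U - 1) - G (V - 1))))) end.
  { unfold c, eU, eV. field. lra. }
  assert (P : 0 <= / (alpha * (E - 1)) *
     (r (U - 1) * (rho * E - (E - exp (alpha * (1 - rho))) / alpha)
      - (E * (Rr (U - 1) - Rr (V - 1)) - eV * (G (U - 1) - G (V - 1))))).
  { apply Rmult_le_pos; [|lra]. left. apply Rinv_0_lt_compat. apply Rmult_lt_0_compat; lra. }
  lra.
Qed.
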